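(* Let $X$ be a locally solid vector lattice. Then each of $Orth_n(X)$, $Orth_b(X)$ and $Orth_c(X)$ is a vector lattice (under the order inherited from $Orth(X)$). In particular, if $T$ belongs to one of these spaces, then its modulus $|T|$ exists and belongs to the same space.
   Context: All vector lattices are Archimedean. For $x,y$ in a vector lattice, $x\perp y$ means $|x|\wedge|y|=0$. A linear operator $T:X\to X$ is band preserving if $x\perp y$ implies $T(x)\perp y$. An orthomorphism on $X$ is an order bounded band preserving linear operator; $Orth(X)$ is the vector lattice of all orthomorphisms on $X$ (ordered by $S\le T$ iff $S(x)\le T(x)$ for all $x\ge 0$). A locally solid vector lattice is a vector lattice with a linear topology having a base of solid zero neighborhoods. An orthomorphism $T$ on a locally solid vector lattice $X$ is $nb$-bounded if there is a zero neighborhood $U$ such that $T(U)$ is topologically bounded; it is $bb$-bounded if it maps topologically bounded sets to topologically bounded sets. $Orth_n(X)$, $Orth_b(X)$, $Orth_c(X)$ denote the sets of $nb$-bounded, $bb$-bounded, and continuous orthomorphisms on $X$, respectively. *)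

(* Defs.v *)
From HB Require Import structures.
From mathcomp Require Import all_boot all_order all_algebra.
From mathcomp Require Import all_classical all_reals all_analysis.
Set Implicit Arguments. Unset Strict Implicit. Unset Printing Implicit Defensive.
Import Order.TTheory GRing.Theory Num.Theory.
Local Open Scope classical_set_scope.
Local Open Scope ring_scope.

Record vector_lattice (R : realType) (X : lmodType R) := VectorLattice {
  vle : X -> X -> Prop;
  vsup : X -> X -> X;
  vle_refl : forall x, vle x x;
  vle_trans : forall x y z, vle x y -> vle y z -> vle x z;
  vle_anti : forall x y, vle x y -> vle y x -> x = y;
  vle_add : forall x y z, vle x y -> vle (x + z) (y + z);
  vle_scale : forall (a : R) x y, 0 <= a -> vle x y -> vle (a *: x) (a *: y);
  vsup_ub1 : forall x y, vle x (vsup x y);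
  vsup_ub2 : forall x y, vle y (vsup x y);
  vsup_least : forall x y z, vle x z -> vle y z -> vle (vsup x y) z;
  varchimedean : forall x y, vle 0 x -> (forall n : nat, vle (x *+ n) y) -> x = 0
}.

Section VL.
Variables (R : realType) (X : topologicalLmodType R) (L : vector_lattice X).

Definition vinf (x y : X) : X := - vsup L (- x) (- y).
Definition vabs (x : X) : X := vsup L x (- x).
Definition vdisj (x y : X) : Prop := vinf (vabs x) (vabs y) = 0.

Definition solid (A : set X) : Prop :=
  forall x y, vle L (vabs y) (vabs x) -> A x -> A y.

Definition locally_solid : Prop :=
  forall U : set X, nbhs (0 : X) U ->
    exists V : set X, [/\ nbhs (0 : X) V, solid V & V `<=` U].

Definition linear_op (T : X -> X) : Prop :=
  forall (a : R) (x y : X), T (a *: x + y) = a *: T x + T y.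

Definition order_bounded (T : X -> X) : Prop :=
  forall x y, vle L x y -> exists a b : X,
    forall z, vle L x z -> vle L z y -> vle L a (T z) /\ vle L (T z) b.

Definition band_preserving (T : X -> X) : Prop :=
  forall x y, vdisj x y -> vdisj (T x) y.

Definition orthomorphism (T : X -> X) : Prop :=
  [/\ linear_op T, order_bounded T & band_preserving T].

Definition orth_le (S T : X -> X) : Prop :=
  forall x, vle L 0 x -> vle L (S x) (T x).

Definition orth_lub (S T U : X -> X) : Prop :=
  [/\ orthomorphism U, orth_le S U, orth_le T U &
      forall V, orthomorphism V -> orth_le S V -> orth_le T V -> orth_le U V].

Definition tbounded (B : set X) : Prop :=
  forall U : set X, nbhs (0 : X) U ->
    exists t : R, 0 < t /\ B `<=` [set t *: u | u in U].

Definition nb_bounded (T : X -> X) : Prop :=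
  exists U : set X, nbhs (0 : X) U /\ tbounded (T @` U).

Definition bb_bounded (T : X -> X) : Prop :=
  forall B : set X, tbounded B -> tbounded (T @` B).

(* The class {T in Orth(X) | Q T} is a vector sublattice of Orth(X):
   a linear subspace, containing the supremum (taken in Orth(X)) of any two
   of its members, and in particular the modulus |T| = T \/ (-T). *)
Definition orth_sublattice (Q : (X -> X) -> Prop) : Prop :=
  let C := fun T => orthomorphism T /\ Q T in
  [/\ C (fun _ => 0),
      forall (a : R) S T, C S -> C T -> C (fun x => a *: S x + T x),
      forall S T, C S -> C T -> exists U, C U /\ orth_lub S T U &
      forall T, C T -> exists M, C M /\ orth_lub T (fun x => - T x) M].

End VL.

(* Main.v *)
Require Import Defs.
From HB Require Import structures.
From mathcomp Require Import all_boot all_order all_algebra.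
From mathcomp Require Import all_classical all_reals all_analysis.
Set Implicit Arguments. Unset Strict Implicit. Unset Printing Implicit Defensive.
Import Order.TTheory GRing.Theory Num.Theory.
Local Open Scope classical_set_scope.
Local Open Scope ring_scope.

Section Lat.
Variables (R : realType) (X : topologicalLmodType R) (L : vector_lattice X).
Local Notation "x <=: y" := (vle L x y) (at level 70).
Local Notation sup := (vsup L).
Local Notation inf := (@vinf R X L).
Local Notation ab := (@vabs R X L).

Lemma leR x : x <=: x. Proof. exact: vle_refl. Qed.
Lemma leT y x z : x <=: y -> y <=: z -> x <=: z. Proof. exact: vle_trans. Qed.
Arguments leT y [x z].
Lemma leA x y : x <=: y -> y <=: x -> x = y. Proof. exact: vle_anti. Qed.
Lemma leD2r z x y : x <=: y -> x + z <=: y + z. Proof. exact: vle_add. Qed.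
Arguments leD2r z [x y].
Lemma leD2l z x y : x <=: y -> z + x <=: z + y.
Proof. by rewrite ![z + _]addrC; apply: leD2r. Qed.
Arguments leD2l z [x y].
Lemma leD a b c d : a <=: b -> c <=: d -> a + c <=: b + d.
Proof. by move=> h1 h2; apply: (leT (b + c)); [apply: leD2r|apply: leD2l]. Qed.
Lemma le_subr x y : x <=: y -> 0 <=: y - x.
Proof. by move=> h; have := leD2r (- x) h; rewrite subrr. Qed.
Lemma subr_le x y : 0 <=: y - x -> x <=: y.
Proof. by move=> h; have := leD2r x h; rewrite add0r subrK. Qed.
Lemma leN x y : x <=: y -> - y <=: - x.
Proof.
move=> h; have := leD2r (- x - y) h.
by rewrite addNKr addrCA subrr addr0.
Qed.
Lemma leNr x y : - x <=: y -> - y <=: x.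
Proof. by move=> /leN; rewrite opprK. Qed.
Lemma leZ a x y : 0 <= a -> x <=: y -> a *: x <=: a *: y.
Proof. exact: vle_scale. Qed.
Lemma leZ_inv a x y : 0 < a -> a *: x <=: a *: y -> x <=: y.
Proof.
move=> a0 h; have ia : 0 <= a^-1 by rewrite invr_ge0 ltW.
have := leZ ia h.
by rewrite !scalerA mulVf ?gt_eqF // !scale1r.
Qed.
Lemma le0Z a x : 0 <= a -> 0 <=: x -> 0 <=: a *: x.
Proof. by move=> a0 h; have := leZ a0 h; rewrite scaler0. Qed.
Lemma le0D x y : 0 <=: x -> 0 <=: y -> 0 <=: x + y.
Proof. by move=> h1 h2; have := leD h1 h2; rewrite addr0. Qed.
Lemma le_addl x y : 0 <=: x -> y <=: x + y.
Proof. by move=> h; have := leD2r y h; rewrite add0r. Qed.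
Lemma le_addr x y : 0 <=: x -> y <=: y + x.
Proof. by rewrite addrC; apply: le_addl. Qed.
Lemma le0N x : x <=: 0 -> 0 <=: - x.
Proof. by move=> /leN; rewrite oppr0. Qed.
Lemma leN0 x : 0 <=: x -> - x <=: 0.
Proof. by move=> /leN; rewrite oppr0. Qed.

Lemma sup_ub1 x y : x <=: sup x y. Proof. exact: vsup_ub1. Qed.
Lemma sup_ub2 x y : y <=: sup x y. Proof. exact: vsup_ub2. Qed.
Lemma sup_le x y z : x <=: z -> y <=: z -> sup x y <=: z. Proof. exact: vsup_least. Qed.
Lemma supC x y : sup x y = sup y x.
Proof. by apply: leA; apply: sup_le; rewrite ?sup_ub1 ?sup_ub2 //; [apply: sup_ub2|apply: sup_ub1|apply: sup_ub2|apply: sup_ub1]. Qed.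
Lemma sup_l x y : y <=: x -> sup x y = x.
Proof. by move=> h; apply: leA; [apply: sup_le => //; apply: leR|apply: sup_ub1]. Qed.
Lemma sup_r x y : x <=: y -> sup x y = y.
Proof. by move=> h; rewrite supC sup_l. Qed.
Lemma sup_mono x x' y y' : x <=: x' -> y <=: y' -> sup x y <=: sup x' y'.
Proof.
move=> h1 h2; apply: sup_le; [apply: (leT x')|apply: (leT y')] => //;
  [apply: sup_ub1|apply: sup_ub2].
Qed.
Lemma supD x y z : sup x y + z = sup (x + z) (y + z).
Proof.
apply: leA; last by apply: sup_le; apply: leD2r; [apply: sup_ub1|apply: sup_ub2].
suff h : sup x y <=: sup (x + z) (y + z) - z by have := leD2r z h; rewrite subrK.
apply: sup_le.
- by have := leD2r (- z) (sup_ub1 (x + z) (y + z)); rewrite addrK.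
- by have := leD2r (- z) (sup_ub2 (x + z) (y + z)); rewrite addrK.
Qed.
Lemma supDl z x y : z + sup x y = sup (z + x) (z + y).
Proof. by rewrite addrC supD ![_ + z]addrC. Qed.
Lemma supZ a x y : 0 <= a -> a *: sup x y = sup (a *: x) (a *: y).
Proof.
rewrite le_eqVlt => /orP[/eqP<-|a0]; first by rewrite !scale0r sup_l //; apply: leR.
apply: leA; last by apply: sup_le; apply: leZ (ltW a0) _; [apply: sup_ub1|apply: sup_ub2].
apply: (@leZ_inv (a^-1)); first by rewrite invr_gt0.
rewrite scalerA mulVf ?gt_eqF // scale1r.
have ia : 0 <= a^-1 by rewrite invr_ge0 ltW.
apply: sup_le.
- have := leZ ia (sup_ub1 (a *: x) (a *: y)).
  by rewrite scalerA mulVf ?gt_eqF // scale1r.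
- have := leZ ia (sup_ub2 (a *: x) (a *: y)).
  by rewrite scalerA mulVf ?gt_eqF // scale1r.
Qed.

Lemma infE x y : inf x y = x + y - sup x y.
Proof.
rewrite /vinf; have := supD (- x) (- y) (x + y).
rewrite addKr [- y + _]addrCA addNr addr0 [sup y x]supC => <-.
by rewrite opprD addrCA subrr addr0.
Qed.
Lemma inf_lb1 x y : inf x y <=: x.
Proof. by rewrite /vinf; apply: leNr; apply: sup_ub1. Qed.
Lemma inf_lb2 x y : inf x y <=: y.
Proof. by rewrite /vinf; apply: leNr; apply: sup_ub2. Qed.
Lemma inf_ge x y z : z <=: x -> z <=: y -> z <=: inf x y.
Proof.
move=> h1 h2; rewrite /vinf; rewrite -[z]opprK; apply: leN.
by apply: sup_le; apply: leN.
Qed.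
Lemma infC x y : inf x y = inf y x.
Proof. by rewrite /vinf supC. Qed.
Lemma inf_mono x x' y y' : x <=: x' -> y <=: y' -> inf x y <=: inf x' y'.
Proof.
move=> h1 h2; apply: inf_ge; [apply: (leT x)|apply: (leT y)] => //;
  [apply: inf_lb1|apply: inf_lb2].
Qed.
Lemma infDl z x y : z + inf x y = inf (z + x) (z + y).
Proof.
by rewrite /vinf !opprD -supDl opprD opprK.
Qed.
Lemma infZ a x y : 0 <= a -> a *: inf x y = inf (a *: x) (a *: y).
Proof. by move=> a0; rewrite /vinf scalerN supZ // !scalerN. Qed.
Lemma inf_ge0 x y : 0 <=: x -> 0 <=: y -> 0 <=: inf x y.
Proof. exact: inf_ge. Qed.
Lemma inf_l x y : x <=: y -> inf x y = x.
Proof. by move=> h; apply: leA; [apply: inf_lb1|apply: inf_ge => //; apply: leR]. Qed.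

Lemma abs_ge x : x <=: ab x. Proof. exact: sup_ub1. Qed.
Lemma abs_geN x : - x <=: ab x. Proof. exact: sup_ub2. Qed.
Lemma abs_le x y : x <=: y -> - x <=: y -> ab x <=: y. Proof. exact: sup_le. Qed.
Lemma absN x : ab (- x) = ab x. Proof. by rewrite /vabs opprK supC. Qed.
Lemma two_pos : (0 : R) < 2. Proof. by []. Qed.
Lemma scale2 (v : X) : 2 *: v = v + v.
Proof. by rewrite -[2]/(2%:R) scaler_nat mulr2n. Qed.
Lemma abs_ge0 x : 0 <=: ab x.
Proof.
apply: (@leZ_inv 2) => //; rewrite scaler0 scale2.
by have := leD (abs_ge x) (abs_geN x); rewrite subrr.
Qed.
Lemma abs_id x : 0 <=: x -> ab x = x.
Proof. by move=> h; apply: sup_l; apply: (leT 0) => //; apply: leN0. Qed.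
Lemma absabs x : ab (ab x) = ab x. Proof. exact/abs_id/abs_ge0. Qed.
Lemma absZ a x : ab (a *: x) = `|a| *: ab x.
Proof.
have [a0|a0] := leP 0 a.
  by rewrite ger0_norm // /vabs supZ // scalerN.
rewrite ltr0_norm // /vabs supZ ?oppr_ge0 ?ltW //.
by rewrite !scaleNr !scalerN opprK supC.
Qed.
Lemma abs_tri x y : ab (x + y) <=: ab x + ab y.
Proof.
apply: abs_le; first by apply: leD; apply: abs_ge.
by rewrite opprD; apply: leD; apply: abs_geN.
Qed.
Lemma abs0 : ab 0 = 0. Proof. by apply: abs_id; apply: leR. Qed.
Lemma abs_eq0 x : ab x = 0 -> x = 0.
Proof.
move=> h; apply: leA; first by rewrite -h; apply: abs_ge.
by rewrite -oppr0; apply: leNr; rewrite -h; apply: abs_geN.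
Qed.

Definition pp x := sup x 0.
Definition nn x := sup (- x) 0.
Lemma pp_ge0 x : 0 <=: pp x. Proof. exact: sup_ub2. Qed.
Lemma nn_ge0 x : 0 <=: nn x. Proof. exact: sup_ub2. Qed.
Lemma nnE x : nn x = pp x - x.
Proof. by rewrite /nn /pp supD add0r subrr supC. Qed.
Lemma ppnnE x : pp x - nn x = x.
Proof. by rewrite nnE opprB addrC subrK. Qed.
Lemma ppnn_abs x : pp x + nn x = ab x.
Proof.
rewrite nnE addrA -scale2 /pp supZ // scaler0 supD add0r scale2 addrK.
by [].
Qed.
Lemma pp_le_abs x : pp x <=: ab x.
Proof. by apply: sup_le; [apply: abs_ge|apply: abs_ge0]. Qed.
Lemma nn_le_abs x : nn x <=: ab x.
Proof. by apply: sup_le; [apply: abs_geN|apply: abs_ge0]. Qed.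
Lemma pp_id x : 0 <=: x -> pp x = x. Proof. exact: sup_l. Qed.
Lemma nn_id x : 0 <=: x -> nn x = 0. Proof. by move=> h; rewrite nnE pp_id // subrr. Qed.
Lemma pp_nn_inf x : inf (pp x) (nn x) = 0.
Proof.
rewrite infE ppnn_abs.
suff -> : sup (pp x) (nn x) = ab x by rewrite subrr.
apply: leA; first by apply: sup_le; [apply: pp_le_abs|apply: nn_le_abs].
apply: abs_le.
- by apply: (leT (pp x)); [apply: sup_ub1|apply: sup_ub1].
- by apply: (leT (nn x)); [apply: sup_ub1|apply: sup_ub2].
Qed.


Local Notation dj := (vdisj L).
Lemma disjC x y : dj x y -> dj y x. Proof. by rewrite /vdisj infC. Qed.
Lemma inf0_mono p q r : 0 <=: p -> p <=: q -> 0 <=: r -> inf q r = 0 -> inf p r = 0.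
Proof.
move=> p0 pq r0 h; apply: leA; last exact: inf_ge0.
by rewrite -h; apply: inf_mono => //; apply: leR.
Qed.
Lemma disj_mono u v y : ab u <=: ab v -> dj v y -> dj u y.
Proof. by move=> h; apply: inf0_mono => //; apply: abs_ge0. Qed.
Lemma riesz p q r : 0 <=: p -> 0 <=: q -> 0 <=: r ->
  inf (p + q) r <=: inf p r + inf q r.
Proof.
move=> p0 q0 r0.
rewrite [inf p r + _]addrC infDl ![inf q r + _]addrC !infDl.
apply: inf_ge; apply: inf_ge.
- exact: inf_lb1.
- by apply: (leT r); [apply: inf_lb2|apply: le_addl].
- by apply: (leT r); [apply: inf_lb2|apply: le_addr].
- by apply: (leT r); [apply: inf_lb2|apply: le_addr].
Qed.
Lemma infZ0 c p q : 0 <= c -> 0 <=: p -> 0 <=: q -> inf p q = 0 ->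
  inf (c *: p) q = 0.
Proof.
move=> c0 p0 q0 h; have cp0 : 0 <=: c *: p by apply: le0Z.
have [c1|c1] := leP c 1.
  apply: (inf0_mono cp0 _ q0 h).
  apply: subr_le; rewrite -{1}[p]scale1r -scalerBl; apply: le0Z => //.
  by rewrite subr_ge0.
apply: leA; last exact: inf_ge0.
have -> : (0 : X) = c *: inf p q by rewrite h scaler0.
rewrite infZ //; apply: inf_mono; first exact: leR.
apply: subr_le; rewrite -{2}[q]scale1r -scalerBl; apply: le0Z => //.
by rewrite subr_ge0 ltW.
Qed.
Lemma disj_sum p q r : 0 <=: p -> 0 <=: q -> 0 <=: r ->
  inf p r = 0 -> inf q r = 0 -> inf (p + q) r = 0.
Proof.
move=> p0 q0 r0 h1 h2; apply: leA; last by apply: inf_ge0 => //; apply: le0D.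
by have := riesz p0 q0 r0; rewrite h1 h2 addr0.
Qed.
Lemma disj_comb a u v y : dj u y -> dj v y -> dj (a *: u + v) y.
Proof.
rewrite /vdisj => hu hv.
apply: (@inf0_mono _ (`|a| *: ab u + ab v)).
- exact: abs_ge0.
- by rewrite -absZ; apply: abs_tri.
- exact: abs_ge0.
apply: disj_sum.
- by apply: le0Z => //; apply: abs_ge0.
- exact: abs_ge0.
- exact: abs_ge0.
- by apply: infZ0 => //; apply: abs_ge0.
- exact: hv.
Qed.
Lemma disj_abs u y : dj u y -> dj (ab u) y.
Proof. by rewrite /vdisj absabs. Qed.
Lemma disj_abs' u y : dj (ab u) y -> dj u y.
Proof. by rewrite /vdisj absabs. Qed.
Lemma disj_pp u y : dj u y -> dj (pp u) y.
Proof. by apply: (disj_mono (v:=u)); rewrite (abs_id (pp_ge0 u)); apply: pp_le_abs. Qed.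
Lemma disj_nn u y : dj u y -> dj (nn u) y.
Proof. by apply: (disj_mono (v:=u)); rewrite (abs_id (nn_ge0 u)); apply: nn_le_abs. Qed.
Lemma disj_opp u y : dj u y -> dj (- u) y.
Proof. by rewrite /vdisj absN. Qed.
Lemma disj_sub u v y : dj u y -> dj v y -> dj (u - v) y.
Proof.
move=> h1 h2; have -> : u - v = (-1) *: v + u by rewrite scaleN1r addrC.
exact: disj_comb.
Qed.

Lemma absPN P N : 0 <=: P -> 0 <=: N -> inf P N = 0 -> ab (P - N) = P + N.
Proof.
move=> P0 N0 h.
have hs : sup P N = P + N.
  by move: h; rewrite infE => /subr0_eq.
have e1 : P - N = (P + P) - (P + N) by rewrite opprD addrA addrK.
have e2 : - (P - N) = (N + N) - (P + N).
  by rewrite opprB opprD addrACA subrr addr0.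
rewrite /vabs e2 e1 -supD -!scale2 -supZ // hs scale2 addrK.
by [].
Qed.

Lemma disj_abs_add u v : dj u v -> ab (u + v) = ab u + ab v.
Proof.
move=> huv.
have huv' : inf (ab v) (ab u) = 0 by move: huv; rewrite /vdisj infC.
have E : u + v = (pp u + pp v) - (nn u + nn v).
  by rewrite opprD addrACA !ppnnE.
have d1 : inf (nn u) (pp u) = 0 by rewrite infC pp_nn_inf.
have d2 : inf (nn v) (pp v) = 0 by rewrite infC pp_nn_inf.
have d3 : inf (nn v) (pp u) = 0.
  apply: (inf0_mono (nn_ge0 _) (nn_le_abs _) (pp_ge0 _)).
  rewrite infC; apply: (inf0_mono (pp_ge0 _) (pp_le_abs _) (abs_ge0 _)).
  by rewrite infC.
have d4 : inf (nn u) (pp v) = 0.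
  apply: (inf0_mono (nn_ge0 _) (nn_le_abs _) (pp_ge0 _)).
  rewrite infC; apply: (inf0_mono (pp_ge0 _) (pp_le_abs _) (abs_ge0 _)).
  by rewrite infC.
rewrite E absPN.
- by rewrite addrACA !ppnn_abs.
- by apply: le0D; apply: pp_ge0.
- by apply: le0D; apply: nn_ge0.
rewrite infC; apply: disj_sum; try (by apply: nn_ge0); try (by apply: pp_ge0);
  try (by apply: le0D; apply: pp_ge0).
- by rewrite infC; apply: disj_sum => //; [apply: pp_ge0|apply: pp_ge0|apply: nn_ge0|rewrite infC|rewrite infC].
- by rewrite infC; apply: disj_sum => //; [apply: pp_ge0|apply: pp_ge0|apply: nn_ge0|rewrite infC|rewrite infC].
Qed.


Lemma disj0 y : dj 0 y.
Proof. by rewrite /vdisj abs0; apply: inf_l; apply: abs_ge0. Qed.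
Lemma le_negself z : 0 <=: z -> - z <=: z.
Proof. by move=> h; apply: (leT 0) => //; apply: leN0. Qed.
Lemma leZn a x y : a <= 0 -> x <=: y -> a *: y <=: a *: x.
Proof.
move=> a0 h; have b0 : 0 <= - a by rewrite oppr_ge0.
have := leN (leZ b0 h); by rewrite !scaleNr !opprK.
Qed.
Lemma swap4 (a b c d : X) : a - b = c - d -> a + d = c + b.
Proof. by move=> h; rewrite -(subrK b a) h addrAC subrK. Qed.
Lemma swap4' (a b c d : X) : a + d = c + b -> a - b = c - d.
Proof. by move=> h; rewrite -(addrK d a) h addrAC addrK. Qed.

Section Lin.
Variable T : X -> X.
Hypothesis lT : linear_op T.
Lemma lin0 : T 0 = 0.
Proof.
have := lT 1 0 0; rewrite scale1r addr0 scale1r => /(congr1 (fun z => z - T 0)).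
by rewrite subrr addrK => <-.
Qed.
Lemma linD x y : T (x + y) = T x + T y.
Proof. by have := lT 1 x y; rewrite !scale1r. Qed.
Lemma linZ a x : T (a *: x) = a *: T x.
Proof. by have := lT a x 0; rewrite !addr0 lin0 addr0. Qed.
Lemma linN x : T (- x) = - T x.
Proof. by rewrite -scaleN1r linZ scaleN1r. Qed.
Lemma linB x y : T (x - y) = T x - T y.
Proof. by rewrite linD linN. Qed.
End Lin.

Lemma bp_disj T : band_preserving L T -> forall x y, dj x y -> dj (T x) (T y).
Proof. by move=> h x y /h /disjC /h /disjC. Qed.

Section Orth.
Variable T : X -> X.
Hypothesis oT : orthomorphism L T.
Let lT : linear_op T. Proof. by case: oT. Qed.
Let bT : order_bounded L T. Proof. by case: oT. Qed.
Let pT : band_preserving L T. Proof. by case: oT. Qed.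
Local Notation f z := (ab (T z)).

Lemma abs_T_abs x : f x = f (ab x).
Proof.
have hd : dj (pp x) (nn x).
  rewrite /vdisj !abs_id; [exact: pp_nn_inf|exact: nn_ge0|exact: pp_ge0].
have hT := bp_disj pT hd.
have hT' : dj (T (pp x)) (- T (nn x)) by apply: disjC; apply: disj_opp; apply: disjC.
rewrite -(ppnn_abs x) -{1}(ppnnE x) (linB lT) (linD lT).
by rewrite (disj_abs_add hT) (disj_abs_add hT') absN.
Qed.

Lemma Tbound x : 0 <=: x -> exists c, 0 <=: c /\
  forall z, 0 <=: z -> z <=: x -> f z <=: c.
Proof.
move=> x0; have [a [b hab]] := bT x0.
exists (ab a + ab b); split; first by apply: le0D; apply: abs_ge0.
move=> z z0 zx; have [h1 h2] := hab z z0 zx; apply: abs_le.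
- apply: (leT b) => //; apply: (leT (ab b)); first exact: abs_ge.
  by apply: le_addl; apply: abs_ge0.
- apply: (leT (- a)); first exact: leN.
  apply: (leT (ab a)); first exact: abs_geN.
  by apply: le_addr; apply: abs_ge0.
Qed.

Lemma f_mono x y : 0 <=: y -> y <=: x -> f y <=: f x.
Proof.
move=> y0 yx; have x0 : 0 <=: x by apply: (leT y).
have [c [c0 hc]] := Tbound x0.
pose D z := f z - f x.
have step : forall y, 0 <=: y -> y <=: x -> exists y1, [/\ 0 <=: y1, y1 <=: x &
    2 *: D y <=: D y1].
  move=> y' y0' yx'; exists (ab (2 *: y' - x)); split.
  - exact: abs_ge0.
  - apply: abs_le.
    + apply: (leT (x + x - x)); last by rewrite addrK; apply: leR.
      by apply: leD2r; rewrite -scale2; apply: leZ.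
    + rewrite opprB; apply: (leT (x - 0)); last by rewrite subr0; apply: leR.
      by apply: leD2l; apply: leN; apply: le0Z.
  - rewrite /D scalerBr.
    apply: (leT (f x + f (ab (2 *: y' - x)) - 2 *: f x)); last first.
      rewrite scale2 opprD addrA [f x + _ - f x]addrAC subrr add0r; exact: leR.
    apply: leD2r.
    rewrite -abs_T_abs.
    have -> : 2 *: f y' = f (x + (2 *: y' - x)).
      by rewrite addrC subrK (linZ lT) absZ ger0_norm.
    by rewrite (linD lT); apply: abs_tri.
have iter : forall n, forall y, 0 <=: y -> y <=: x -> (2 ^ n)%:R *: D y <=: c.
  elim=> [|n IH] y' y0' yx'.
    rewrite expn0 scale1r; apply: (leT (f y')); last exact: hc.
    by apply: subr_le; rewrite /D opprB addrC subrK; apply: abs_ge0.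
  have [y1 [h1 h2 h3]] := step y' y0' yx'.
  rewrite expnS natrM mulrC -scalerA; apply: (leT ((2 ^ n)%:R *: D y1)).
    exact: leZ.
  exact: IH.
have d0 : pp (D y) = 0.
  apply: (varchimedean (y := c)); first exact: pp_ge0.
  move=> n; rewrite -scaler_nat.
  apply: (leT ((2 ^ n)%:R *: pp (D y))).
    apply: subr_le; rewrite -scalerBl; apply: le0Z; last exact: pp_ge0.
    by rewrite subr_ge0 ler_nat ltnW // ltn_expl.
  rewrite /pp supZ // scaler0; apply: sup_le => //.
  exact: iter.
have : D y <=: 0 by rewrite -d0; apply: sup_ub1.
by move=> /(leD2r (f x)); rewrite /D subrK add0r.
Qed.

Lemma f_mono' x w : 0 <=: x -> ab w <=: x -> f w <=: f x.
Proof. by move=> x0 h; rewrite abs_T_abs; apply: f_mono => //; apply: abs_ge0. Qed.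

Lemma f_add x z : 0 <=: x -> 0 <=: z -> f (x + z) = f x + f z.
Proof.
move=> x0 z0; apply: leA; first by rewrite (linD lT); apply: abs_tri.
have xz0 : 0 <=: x + z by apply: le0D.
have g : forall w, ab w <=: x + z -> T w <=: f (x + z).
  by move=> w hw; apply: (leT (f w)); [apply: abs_ge|apply: f_mono'].
have nx := le_negself x0; have nz := le_negself z0.
rewrite /vabs supD; apply: sup_le; rewrite supDl; apply: sup_le.
- by rewrite -(linD lT); apply: g; rewrite abs_id //; apply: leR.
- rewrite -(linB lT); apply: g; apply: abs_le; first by apply: leD2l.
  by rewrite opprB addrC; apply: leD2r.
- rewrite -(linN lT) -(linD lT); apply: g; apply: abs_le; first by apply: leD2r.
  by rewrite opprD opprK; apply: leD2l.
- rewrite -(linN lT) -(linB lT); apply: g; rewrite -opprD absN abs_id //.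
  exact: leR.
Qed.

Lemma fZ a p : 0 <= a -> f (a *: p) = a *: f p.
Proof. by move=> a0; rewrite (linZ lT) absZ ger0_norm. Qed.

Definition Mod x := f (pp x) - f (nn x).

Ltac ge0 := first [ done | exact: pp_ge0 | exact: nn_ge0 | exact: abs_ge0
  | (apply: le0D; ge0) | (apply: le0Z; [done | ge0]) ].

Lemma Mod_rep x p n : 0 <=: p -> 0 <=: n -> x = p - n -> Mod x = f p - f n.
Proof.
move=> p0 n0 hx; rewrite /Mod; apply: swap4'.
rewrite -!f_add; try ge0.
by congr (ab (T _)); apply: swap4; rewrite ppnnE.
Qed.

Lemma Mod_pos x : 0 <=: x -> Mod x = f x.
Proof. by move=> x0; rewrite /Mod pp_id // nn_id // lin0 // abs0 subr0. Qed.

Lemma Mod_lin : linear_op Mod.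
Proof.
move=> a x y.
have [a0|a0] := leP 0 a.
  rewrite (@Mod_rep _ (a *: pp x + pp y) (a *: nn x + nn y)).
  - rewrite !f_add; try ge0; rewrite !fZ //.
    by rewrite /Mod scalerBr opprD addrACA.
  - by apply: le0D; [apply: le0Z => //; apply: pp_ge0|apply: pp_ge0].
  - by apply: le0D; [apply: le0Z => //; apply: nn_ge0|apply: nn_ge0].
  - by rewrite opprD addrACA -scalerBr !ppnnE.
have b0 : 0 <= - a by rewrite oppr_ge0 ltW.
rewrite (@Mod_rep _ ((- a) *: nn x + pp y) ((- a) *: pp x + nn y)).
- rewrite !f_add; try ge0; rewrite !fZ //.
  by rewrite /Mod opprD addrACA -scalerBr scaleNr -scalerN opprB.
- by apply: le0D; [apply: le0Z => //; apply: nn_ge0|apply: pp_ge0].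
- by apply: le0D; [apply: le0Z => //; apply: pp_ge0|apply: nn_ge0].
- by rewrite opprD addrACA -scalerBr scaleNr -scalerN opprB !ppnnE.
Qed.

Lemma Mod_ge0 x : 0 <=: x -> 0 <=: Mod x.
Proof. by move=> x0; rewrite Mod_pos //; apply: abs_ge0. Qed.

Lemma Mod_mono x y : x <=: y -> Mod x <=: Mod y.
Proof.
move=> h; apply: subr_le; rewrite -(linB Mod_lin); apply: Mod_ge0.
exact: le_subr.
Qed.

Lemma Mod_orth : orthomorphism L Mod.
Proof.
split; first exact: Mod_lin.
- move=> x y h; exists (Mod x), (Mod y) => z h1 h2.
  by split; apply: Mod_mono.
- move=> x y h; rewrite /Mod; apply: disj_sub; apply: disj_abs; apply: pT.
  + exact: disj_pp.
  + exact: disj_nn.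
Qed.

Lemma Mod_lub : orth_lub L T (fun x => - T x) Mod.
Proof.
split.
- exact: Mod_orth.
- by move=> x x0; rewrite Mod_pos //; apply: abs_ge.
- by move=> x x0; rewrite Mod_pos //; apply: abs_geN.
- by move=> V _ h1 h2 x x0; rewrite Mod_pos //; apply: abs_le; [apply: h1|apply: h2].
Qed.

End Orth.


Lemma orth0 : orthomorphism L (fun _ : X => 0).
Proof.
split.
- by move=> a x y; rewrite scaler0 addr0.
- by move=> x y h; exists 0, 0 => z _ _; split; apply: leR.
- by move=> x y h; apply: disj0.
Qed.

Lemma orth_comb a S T : orthomorphism L S -> orthomorphism L T ->
  orthomorphism L (fun x => a *: S x + T x).
Proof.
move=> [lS bS pS] [lT bT pT]; split.
- move=> b x y; rewrite (lS b x y) (lT b x y) scalerDr scalerA mulrC -scalerA.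
  by rewrite [b *: (_ + _)]scalerDr addrACA.
- move=> x y h; have [a1 [b1 h1]] := bS x y h; have [a2 [b2 h2]] := bT x y h.
  have [a0|a0] := leP 0 a.
    exists (a *: a1 + a2), (a *: b1 + b2) => z z1 z2.
    have [u1 u2] := h1 z z1 z2; have [v1 v2] := h2 z z1 z2.
    by split; apply: leD => //; apply: leZ.
  exists (a *: b1 + a2), (a *: a1 + b2) => z z1 z2.
  have [u1 u2] := h1 z z1 z2; have [v1 v2] := h2 z z1 z2.
  by split; apply: leD => //; apply: leZn => //; apply: ltW.
- by move=> x y h; apply: disj_comb; [apply: pS|apply: pT].
Qed.

Theorem orth_sub_gen (Q : (X -> X) -> Prop) :
  Q (fun _ => 0) ->
  (forall a S T, orthomorphism L S -> orthomorphism L T -> Q S -> Q T ->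
     Q (fun x => a *: S x + T x)) ->
  (forall T, orthomorphism L T -> Q T -> Q (Mod T)) ->
  orth_sublattice L Q.
Proof.
move=> Q0 Qc Qm; split.
- by split; [exact: orth0|exact: Q0].
- move=> a S T [oS qS] [oT qT]; split; [exact: orth_comb|exact: Qc].
- move=> S T [oS qS] [oT qT].
  pose D := fun x => (-1) *: T x + S x.
  have oD : orthomorphism L D by apply: orth_comb.
  have qD : Q D by apply: Qc.
  pose MD := Mod D.
  have oM : orthomorphism L MD by apply: Mod_orth.
  have qM : Q MD by apply: Qm.
  pose W1 := fun x => 1 *: T x + MD x.
  have oW1 : orthomorphism L W1 by apply: orth_comb.
  have qW1 : Q W1 by apply: Qc.
  pose W2 := fun x => 1 *: S x + W1 x.
  have oW2 : orthomorphism L W2 by apply: orth_comb.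
  have qW2 : Q W2 by apply: Qc.
  pose U := fun x => 2^-1 *: W2 x + (fun _ : X => (0 : X)) x.
  have oU : orthomorphism L U by apply: orth_comb => //; exact: orth0.
  have qU : Q U by apply: (Qc _ W2 (fun _ => 0)) => //; exact: orth0.
  have Ux : forall x, 0 <=: x -> 2 *: U x = S x + (T x + ab (S x - T x)).
    move=> x x0; rewrite /U /W2 /W1 /MD (Mod_pos oD x0) /D addr0 scalerA mulfV //.
    by rewrite !scale1r scaleN1r [- T x + _]addrC.
  have e1 : forall x, S x + S x = S x + (T x + (S x - T x)).
    by move=> x; rewrite [T x + _]addrC subrK.
  have e2 : forall x, T x + T x = S x + (T x + - (S x - T x)).
    by move=> x; rewrite opprB addrCA [S x + _]addrC subrK.
  exists U; split; first by split.
  split => //.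
  + move=> x x0; apply: (@leZ_inv 2) => //; rewrite Ux // scale2 e1.
    by apply: leD2l; apply: leD2l; apply: abs_ge.
  + move=> x x0; apply: (@leZ_inv 2) => //; rewrite Ux // scale2 e2.
    by apply: leD2l; apply: leD2l; apply: abs_geN.
  + move=> V _ h1 h2 x x0; apply: (@leZ_inv 2) => //; rewrite Ux // scale2.
    rewrite /vabs !supDl; apply: sup_le.
    * by rewrite -e1; apply: leD; apply: h1.
    * by rewrite -e2; apply: leD; [apply: h2|apply: h2].
- move=> T [oT qT]; exists (Mod T); split; last exact: Mod_lub.
  by split; [exact: Mod_orth|exact: Qm].
Qed.


Lemma half (W : set X) : nbhs 0 W ->
  exists W1 : set X, nbhs 0 W1 /\ forall a b, W1 a -> W1 b -> W (a + b).
Proof.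
move=> W0.
have := @add_continuous X (0, 0); rewrite /continuous_at/= addr0 => /(_ W W0)[]/=.
move=> [W1 W2] [] /= h1 h2 Wadd.
exists (W1 `&` W2); split; first exact: filterI.
by move=> a b [ha _] [_ hb]; apply: (Wadd (a, b)); split.
Qed.

Lemma solid_abs V x : solid L V -> V x -> V (ab x).
Proof. by move=> sV; apply: sV; rewrite absabs; apply: leR. Qed.
Lemma solid_N V x : solid L V -> V x -> V (- x).
Proof. by move=> sV; apply: sV; rewrite absN; apply: leR. Qed.
Lemma solid_pp V x : solid L V -> V x -> V (pp x).
Proof. by move=> sV; apply: sV; rewrite (abs_id (pp_ge0 x)); apply: pp_le_abs. Qed.
Lemma solid_nn V x : solid L V -> V x -> V (nn x).
Proof. by move=> sV; apply: sV; rewrite (abs_id (nn_ge0 x)); apply: nn_le_abs. Qed.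
Lemma solid_Z V c x : solid L V -> `|c| <= 1 -> V x -> V (c *: x).
Proof.
move=> sV c1; apply: sV; rewrite absZ; apply: subr_le.
rewrite -{1}[ab x]scale1r -scalerBl; apply: le0Z; last exact: abs_ge0.
by rewrite subr_ge0.
Qed.

Section WithHX.
Hypothesis HX : locally_solid L.

Lemma solid_nbhs U : nbhs 0 U -> exists V, [/\ nbhs 0 V, solid L V & V `<=` U].
Proof. exact: HX. Qed.

Lemma half_solid W : nbhs 0 W ->
  exists V, [/\ nbhs 0 V, solid L V & forall a b, V a -> V b -> W (a + b)].
Proof.
move=> W0; have [W1 [h1 hW]] := half W0.
have [V [V0 sV VW]] := solid_nbhs h1.
by exists V; split => // a b ha hb; apply: hW; apply: VW.
Qed.

Lemma tb_sub (A B : set X) : A `<=` B -> tbounded (X := X) B -> tbounded (X := X) A.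
Proof.
move=> AB hB U U0; have [t [t0 ht]] := hB U U0.
by exists t; split => // z /AB /ht.
Qed.

Lemma tb0 : tbounded (X := X) (fun z : X => z = 0).
Proof.
move=> U U0; exists 1; split => // z ->; exists 0; first exact: nbhs_singleton.
by rewrite scaler0.
Qed.

Lemma tb_comb a (A1 A2 : set X) : tbounded (X := X) A1 -> tbounded (X := X) A2 ->
  tbounded (X := X) (fun z => exists u v, [/\ A1 u, A2 v & z = a *: u + v]).
Proof.
move=> b1 b2 W W0; have [V [V0 sV hV]] := half_solid W0.
have [t1 [t1p h1]] := b1 V V0; have [t2 [t2p h2]] := b2 V V0.
have tp : 0 < `|a| * t1 + t2 by rewrite ltr_wpDl // mulr_ge0 // ltW.
exists (`|a| * t1 + t2); split => //.
move=> z [u [v [hu hv ->]]].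
have [w1 hw1 <-] := h1 u hu; have [w2 hw2 <-] := h2 v hv.
exists ((a * t1 / (`|a| * t1 + t2)) *: w1 + (t2 / (`|a| * t1 + t2)) *: w2).
  apply: hV; apply: solid_Z => //.
  - rewrite normrM normfV (gtr0_norm tp) normrM (gtr0_norm t1p) ler_pdivrMr //.
    by rewrite mul1r lerDl ltW.
  - rewrite normrM normfV (gtr0_norm tp) (gtr0_norm t2p) ler_pdivrMr //.
    by rewrite mul1r lerDr mulr_ge0 // ltW.
rewrite scalerDr !scalerA; congr (_ *: _ + _ *: _).
  by rewrite mulrCA mulfV ?mulr1 // gt_eqF.
by rewrite mulrCA mulfV ?mulr1 // gt_eqF.
Qed.

Lemma Mod_bd T (D D' : set X) : orthomorphism L T ->
  (forall x, D x -> D' (pp x) /\ D' (nn x)) ->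
  tbounded (X := X) (T @` D') -> tbounded (X := X) (Mod T @` D).
Proof.
move=> oT hD b W W0; have [V [V0 sV hV]] := half_solid W0.
have [t [tp ht]] := b V V0.
exists t; split => //; move=> z [x Dx <-]; have [d1 d2] := hD x Dx.
have [w1 hw1 e1] : exists2 w, V w & t *: w = T (pp x).
  by apply: ht; exists (pp x).
have [w2 hw2 e2] : exists2 w, V w & t *: w = T (nn x).
  by apply: ht; exists (nn x).
exists (ab w1 - ab w2).
  by apply: hV; [apply: solid_abs|apply: solid_N => //; apply: solid_abs].
by rewrite /Mod -e1 -e2 !absZ (gtr0_norm tp) scalerBr.
Qed.

Lemma nb0 : nb_bounded (X := X) (fun _ : X => 0).
Proof.
exists setT; split; first exact: filterT.
by apply: (tb_sub _ tb0) => z [x _ <-].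
Qed.

Lemma nbc a S T : nb_bounded (X := X) S -> nb_bounded (X := X) T -> nb_bounded (X := X) (fun x => a *: S x + T x).
Proof.
move=> [U1 [h1 b1]] [U2 [h2 b2]]; exists (U1 `&` U2); split; first exact: filterI.
apply: (tb_sub _ (tb_comb a b1 b2)) => z [x [x1 x2] <-].
by exists (S x), (T x); split; [exists x|exists x|].
Qed.

Lemma nbM T : orthomorphism L T -> nb_bounded (X := X) T -> nb_bounded (X := X) (Mod T).
Proof.
move=> oT [U [hU bU]]; have [V [hV sV VU]] := solid_nbhs hU.
exists V; split => //; apply: (@Mod_bd _ _ V) => //.
  by move=> x Vx; split; [apply: solid_pp|apply: solid_nn].
by apply: (tb_sub _ bU) => z [x Vx <-]; exists x => //; apply: VU.
Qed.

Lemma bb0 : bb_bounded (X := X) (fun _ : X => 0).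
Proof. by move=> B _; apply: (tb_sub _ tb0) => z [x _ <-]. Qed.

Lemma bbc a S T : bb_bounded (X := X) S -> bb_bounded (X := X) T -> bb_bounded (X := X) (fun x => a *: S x + T x).
Proof.
move=> hS hT B hB; apply: (tb_sub _ (tb_comb a (hS B hB) (hT B hB))) => z [x Bx <-].
by exists (S x), (T x); split; [exists x|exists x|].
Qed.

Lemma bbM T : orthomorphism L T -> bb_bounded (X := X) T -> bb_bounded (X := X) (Mod T).
Proof.
move=> oT hT B hB.
pose D' := fun z => exists2 x, B x & (z = pp x \/ z = nn x).
apply: (@Mod_bd _ _ D') => //.
  by move=> x Bx; split; exists x => //; [left|right].
apply: hT => W W0; have [V [V0 sV VW]] := solid_nbhs W0.
have [t [tp ht]] := hB V V0.
exists t; split => //; move=> z [x Bx hz]; have [v hv ev] := ht x Bx.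
case: hz => ->.
- exists (pp v); first by apply: VW; apply: solid_pp.
  by rewrite -ev /pp supZ ?ltW // scaler0.
- exists (nn v); first by apply: VW; apply: solid_nn.
  by rewrite -ev /nn supZ ?ltW // scaler0 scalerN.
Qed.

Lemma cont_at0 F : linear_op (X := X) F -> continuous F ->
  forall W, nbhs 0 W -> nbhs 0 (F @^-1` W).
Proof.
move=> lF cF W W0; have := cF 0; rewrite /continuous_at (lin0 lF) => /(_ W W0).
by [].
Qed.

Lemma lin_cont F : linear_op (X := X) F ->
  (forall W, nbhs 0 W -> nbhs 0 (F @^-1` W)) -> continuous F.
Proof.
move=> lF h x W WFx.
have := @add_continuous X (F x, 0); rewrite /continuous_at /= addr0.
move=> /(_ W WFx) [] /= [A B] [] /= hA hB AB.
have hB' := h B hB.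
have := nbhsB_subproof (@add_continuous X) x hB'; rewrite addr0.
apply: filterS => y [v hv <-]; rewrite /= (linD lF).
by apply: (AB (F x, F v)); split => //=; exact: (nbhs_singleton hA).
Qed.

Lemma cont0 : continuous (fun _ : X => (0 : X)).
Proof. exact: cst_continuous. Qed.

Lemma contc a S T : orthomorphism L S -> orthomorphism L T ->
  continuous S -> continuous T -> continuous (fun x => a *: S x + T x).
Proof.
move=> oS oT cS cT.
have [lC _ _] := orth_comb a oS oT.
have [lS _ _] := oS; have [lT _ _] := oT.
apply: lin_cont => // W W0; have [W1 [h1 hW]] := half W0.
have := @scale_continuous R X (a : R^o, 0 : X); rewrite /continuous_at /= scaler0.
move=> /(_ W1 h1) [] /= [A B] [] /= hA hB AB.
apply: (filterS _ (filterI (cont_at0 lS cS hB) (cont_at0 lT cT h1))).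
move=> x [hx1 hx2] /=; apply: hW => //.
have /= := AB (a, S x); apply; split; [exact: (nbhs_singleton hA)|done].
Qed.

Lemma contM T : orthomorphism L T -> continuous T -> continuous (Mod T).
Proof.
move=> oT cT; have [lT _ _] := oT.
apply: lin_cont; first exact: Mod_lin.
move=> W W0; have [V [V0 sV hV]] := half_solid W0.
have [U [U0 sU UV]] := solid_nbhs (cont_at0 lT cT V0).
apply: filterS U0 => x Ux; rewrite /= /Mod.
apply: hV; [apply: solid_abs|apply: solid_N => //; apply: solid_abs] => //;
  apply: UV; [apply: solid_pp|apply: solid_nn] => //.
Qed.

End WithHX.
End Lat.

Theorem mainTheorem1 (R : realType) (X : topologicalLmodType R)
  (L : vector_lattice X) (HX : locally_solid L) :
  [/\ orth_sublattice L (nb_bounded (X := X)),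
      orth_sublattice L (bb_bounded (X := X)) &
      orth_sublattice L (fun T : X -> X => continuous T)].
Proof.
split.
- apply: orth_sub_gen.
  + exact: nb0.
  + move=> a S T _ _; exact: (nbc HX).
  + exact: (nbM HX).
- apply: orth_sub_gen.
  + exact: bb0.
  + move=> a S T _ _; exact: (bbc HX).
  + exact: (bbM HX).
- apply: orth_sub_gen.
  + exact: cont0.
  + move=> a S T oS oT cS cT; exact: (contc (a := a) oS oT cS cT).
  + exact: (contM HX).
Qed.
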